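(* For $A$ and $B$ as in the setting, the following decomposition formulae hold: \[ e^{A+B} = e^{dcl_{A}(B)}e^{A} + O(\| B \|^2), \qquad e^{A+B} = e^{A} e^{dcr_{A}(B)} + O(\| B \|^2). \] Additionally, if $A$ satisfies $e^{a_j - a_k} \neq 1$ for all $j \neq k$, the following composition formulae hold: \[ e^{B} e^{A} = e^{A + cml_{A}(B)} + O(\| B \|^2), \qquad e^{A} e^{B} = e^{A + cmr_{A}(B)} + O(\| B \|^2), \] where $\| \cdot \|$ denotes the Frobenius norm.
   Context: Let $A, B \in \mathbb{C}^{m \times m}$ be square complex matrices, with $B$ a (sufficiently small) perturbation. Suppose that $A$ is diagonalizable (not necessarily unitarily diagonalizable), and let $A=\sum_i a_i P_i$ be its spectral decomposition, where $a_i$ are the distinct eigenvalues ($a_i \neq a_j$ if $i\neq j$) and $P_i$ are projections satisfying $P_i P_j = \delta_{ij} P_i$ and $\sum_j P_j = I_m$. Define complex numbers $\ell_{jk}(A) := 1$ if $j=k$ and $\ell_{jk}(A) := (e^{a_j - a_k} -1)/(a_j - a_k)$ if $j\neq k$. For any $X \in \mathbb{C}^{m \times m}$ define the linear maps $dcl_{A}(X) := \sum_{j,k} \ell_{jk}(A) P_j X P_k$, $dcr_{A}(X) := \sum_{j,k} \ell_{kj}(A) P_j X P_k$, $cml_{A}(X) := \sum_{j,k} \frac{1}{\ell_{jk}(A)} P_j X P_k$, $cmr_{A}(X) := \sum_{j,k} \frac{1}{\ell_{kj}(A)} P_j X P_k$. *)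

(* Defs.v *)
From HB Require Import structures.
From mathcomp Require Import all_boot all_order all_algebra.
From mathcomp Require Import all_classical all_reals all_analysis.
From mathcomp Require Import complex.
Set Implicit Arguments. Unset Strict Implicit. Unset Printing Implicit Defensive.
Import Order.TTheory GRing.Theory Num.Theory.
Import numFieldNormedType.Exports.
Local Open Scope ring_scope.
Local Open Scope complex_scope.

Section Defs.
Variable R : realType.
Local Notation C := R[i].

Definition clim (u : nat -> C) : C :=
  (limn (fun n => complex.Re (u n))) +i* (limn (fun n => complex.Im (u n))).

Definition cexp (z : C) : C :=
  clim (fun N => \sum_(k < N) (k`!%:R)^-1 * z ^+ k).

Definition expm (m : nat) (M : 'M[C]_m) : 'M[C]_m :=
  \matrix_(i, j) clim (fun N => (\sum_(k < N) (k`!%:R)^-1 *: M ^+ k) i j).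

Definition frob (m n : nat) (B : 'M[C]_(m, n)) : R :=
  Num.sqrt (\sum_i \sum_j (complex.Re (B i j) ^+ 2 + complex.Im (B i j) ^+ 2)).

(* ell_{jk}(A) for A = sum_i a_i P_i *)
Definition ell (r : nat) (a : 'I_r -> C) (j k : 'I_r) : C :=
  if j == k then 1 else (cexp (a j - a k) - 1) / (a j - a k).

Definition dcl (r m : nat) (a : 'I_r -> C) (P : 'I_r -> 'M[C]_m) (X : 'M[C]_m) :=
  \sum_j \sum_k ell a j k *: (P j *m X *m P k).
Definition dcr (r m : nat) (a : 'I_r -> C) (P : 'I_r -> 'M[C]_m) (X : 'M[C]_m) :=
  \sum_j \sum_k ell a k j *: (P j *m X *m P k).
Definition cml (r m : nat) (a : 'I_r -> C) (P : 'I_r -> 'M[C]_m) (X : 'M[C]_m) :=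
  \sum_j \sum_k (ell a j k)^-1 *: (P j *m X *m P k).
Definition cmr (r m : nat) (a : 'I_r -> C) (P : 'I_r -> 'M[C]_m) (X : 'M[C]_m) :=
  \sum_j \sum_k (ell a k j)^-1 *: (P j *m X *m P k).

Definition bigO2 (m : nat) (F G : 'M[C]_m -> 'M[C]_m) : Prop :=
  exists K : R, exists2 d : R, 0 < d &
    forall B : 'M[C]_m, frob B < d -> frob (F B - G B) <= K * frob B ^+ 2.

End Defs.

(* Main.v *)
Require Import Defs.
From HB Require Import structures.
From mathcomp Require Import all_boot all_order all_algebra.
From mathcomp Require Import all_classical all_reals all_analysis.
From mathcomp Require Import complex.
From mathcomp Require Import ring lra zify.
Import Order.TTheory GRing.Theory Num.Theory.
Import numFieldNormedType.Exports.
Set Implicit Arguments. Unset Strict Implicit. Unset Printing Implicit Defensive.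
Local Open Scope ring_scope.
Local Open Scope classical_set_scope.
Local Open Scope complex_scope.

Section NC.
Variable R : realType.
Local Notation C := R[i].

Definition nc (z : C) : R := Num.sqrt (complex.Re z ^+ 2 + complex.Im z ^+ 2).

Lemma ncE (z : C) : `|z| = (nc z)%:C.
Proof. by rewrite normc_def. Qed.

Lemma nc_ge0 z : 0 <= nc z.
Proof. exact: sqrtr_ge0. Qed.

Lemma ncD x y : nc (x + y) <= nc x + nc y.
Proof. by rewrite -lecR rmorphD /= -!ncE ler_normD. Qed.

Lemma ncM x y : nc (x * y) = nc x * nc y.
Proof. by apply: complexI; rewrite rmorphM /= -!ncE normrM. Qed.

Lemma ncN x : nc (- x) = nc x.
Proof. by apply: complexI; rewrite -!ncE normrN. Qed.

Lemma nc0 : nc 0 = 0.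
Proof. by apply: complexI; rewrite -!ncE normr0. Qed.

Lemma ncB x y : nc (x - y) = nc (y - x).
Proof. by rewrite -ncN opprB. Qed.

Lemma nc_eq0 x : nc x = 0 -> x = 0.
Proof. by move=> h; apply/eqP; rewrite -normr_eq0 ncE h. Qed.

Lemma nc_real (x : R) : nc x%:C = `|x|.
Proof. by rewrite /nc /= expr0n /= addr0 sqrtr_sqr. Qed.

Lemma nc_nat (n : nat) : nc n%:R = n%:R.
Proof. by rewrite -(rmorph_nat (real_complex R)) nc_real ger0_norm. Qed.

Lemma ncV x : nc x^-1 = (nc x)^-1.
Proof. by apply: complexI; rewrite -!ncE normfV ncE fmorphV. Qed.

Lemma nc_Re z : `|complex.Re z| <= nc z.
Proof.
case: z => a b; rewrite /nc /= -sqrtr_sqr ler_sqrt ?addr_ge0 ?sqr_ge0 //.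
by rewrite lerDl sqr_ge0.
Qed.

Lemma nc_Im z : `|complex.Im z| <= nc z.
Proof.
case: z => a b; rewrite /nc /= -sqrtr_sqr ler_sqrt ?addr_ge0 ?sqr_ge0 //.
by rewrite lerDr sqr_ge0.
Qed.

Lemma nc_ReIm z : nc z <= `|complex.Re z| + `|complex.Im z|.
Proof.
rewrite /nc -[X in _ <= X]ger0_norm ?addr_ge0 // -sqrtr_sqr ler_sqrt ?sqr_ge0 //.
rewrite sqrrD !real_normK ?num_real //.
by rewrite addrAC lerDl mulrn_wge0 // mulr_ge0.
Qed.

Lemma nc_sum (I : Type) (s : seq I) (P : pred I) (f : I -> C) :
  nc (\sum_(i <- s | P i) f i) <= \sum_(i <- s | P i) nc (f i).
Proof.
elim/big_rec2: _ => [|i y x _ H]; first by rewrite nc0.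
exact: le_trans (ncD _ _) (lerD (lexx _) H).
Qed.

Lemma nc_inv_fact k : nc (k`!%:R)^-1 = (k`!%:R)^-1.
Proof. by rewrite ncV nc_nat. Qed.

Lemma Re_sum (I : Type) (s : seq I) (f : I -> C) :
  complex.Re (\sum_(i <- s) f i) = \sum_(i <- s) complex.Re (f i).
Proof. elim/big_rec2: _ => // i a b _ <-. by case: (f i); case: b. Qed.

Lemma Im_sum (I : Type) (s : seq I) (f : I -> C) :
  complex.Im (\sum_(i <- s) f i) = \sum_(i <- s) complex.Im (f i).
Proof. elim/big_rec2: _ => // i a b _ <-. by case: (f i); case: b. Qed.


Section NM.
Variables (m n : nat).
Implicit Types X Y : 'M[C]_(m, n).

Definition nm (m' n' : nat) (X : 'M[C]_(m', n')) : R := \sum_i \sum_j nc (X i j).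

Lemma nm_ge0 X : 0 <= nm X.
Proof. by apply: sumr_ge0 => i _; apply: sumr_ge0 => j _; exact: nc_ge0. Qed.

Lemma nmD X Y : nm (X + Y) <= nm X + nm Y.
Proof.
rewrite /nm -big_split /= ler_sum // => i _; rewrite -big_split ler_sum // => j _.
by rewrite mxE ncD.
Qed.

Lemma nmN X : nm (- X) = nm X.
Proof. by apply: eq_bigr => i _; apply: eq_bigr => j _; rewrite mxE ncN. Qed.

Lemma nmB X Y : nm (X - Y) = nm (Y - X).
Proof. by rewrite -nmN opprB. Qed.

Lemma nmZ c X : nm (c *: X) = nc c * nm X.
Proof.
rewrite /nm mulr_sumr; apply: eq_bigr => i _; rewrite mulr_sumr.
by apply: eq_bigr => j _; rewrite mxE ncM.
Qed.

Lemma nm0 : nm (0 : 'M[C]_(m, n)) = 0.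
Proof. by rewrite /nm big1 // => i _; rewrite big1 // => j _; rewrite mxE nc0. Qed.

Lemma nm_entry X i j : nc (X i j) <= nm X.
Proof.
rewrite /nm (bigD1 i) //= (bigD1 j) //= -addrA lerDl addr_ge0 //.
  by apply: sumr_ge0 => k _; exact: nc_ge0.
by apply: sumr_ge0 => k _; apply: sumr_ge0 => l _; exact: nc_ge0.
Qed.

Lemma nm_le0 X : nm X <= 0 -> X = 0.
Proof.
move=> h; apply/matrixP => i j; rewrite mxE; apply: nc_eq0.
by apply: le_anti; rewrite nc_ge0 andbT (le_trans (nm_entry X i j) h).
Qed.

Lemma nm_sum (I : Type) (s : seq I) (P : pred I) (F : I -> 'M[C]_(m, n)) :
  nm (\sum_(i <- s | P i) F i) <= \sum_(i <- s | P i) nm (F i).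
Proof.
elim/big_rec2: _ => [|i y x _ H]; first by rewrite nm0.
exact: le_trans (nmD _ _) (lerD (lexx _) H).
Qed.

End NM.

Lemma nm_mul (m n p : nat) (X : 'M[C]_(m, n)) (Y : 'M[C]_(n, p)) :
  nm (X *m Y) <= nm X * nm Y.
Proof.
rewrite /nm mulr_suml.
apply: ler_sum => i _.
apply: (@le_trans _ _ (\sum_k \sum_j nc (X i j) * nc (Y j k))).
  by apply: ler_sum => k _; rewrite mxE; apply: le_trans (nc_sum _ _ _) _;
     apply: ler_sum => j _; rewrite ncM.
rewrite exchange_big /= mulr_suml; apply: ler_sum => j _.
rewrite -mulr_sumr; apply: ler_wpM2l; first exact: nc_ge0.
rewrite (bigD1 j) //= lerDl.
by apply: sumr_ge0 => k _; apply: sumr_ge0 => l _; exact: nc_ge0.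
Qed.

Lemma sum_sqr_le (I : Type) (s : seq I) (f : I -> R) :
  (forall i, 0 <= f i) ->
  \sum_(i <- s) f i ^+ 2 <= (\sum_(i <- s) f i) ^+ 2.
Proof.
move=> f0; elim: s => [|x s IH]; first by rewrite !big_nil expr0n.
rewrite !big_cons sqrrD -addrA lerD2l.
apply: le_trans IH _; rewrite lerDr.
by rewrite mulrn_wge0 // mulr_ge0 // sumr_ge0.
Qed.

Lemma nc_sqr z : nc z ^+ 2 = complex.Re z ^+ 2 + complex.Im z ^+ 2.
Proof. by rewrite /nc sqr_sqrtr // addr_ge0 // sqr_ge0. Qed.

Lemma frob_nm (m n : nat) (X : 'M[C]_(m, n)) : frob X = Num.sqrt (\sum_i \sum_j nc (X i j) ^+ 2).
Proof. by rewrite /frob; congr Num.sqrt; apply: eq_bigr => i _; apply: eq_bigr => j _; rewrite nc_sqr. Qed.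

Lemma frob_le_nm (m n : nat) (X : 'M[C]_(m, n)) : frob X <= nm X.
Proof.
rewrite frob_nm -(ger0_norm (nm_ge0 X)) -sqrtr_sqr ler_sqrt ?sqr_ge0 //.
apply: le_trans (sum_sqr_le _ _) => [|i]; last first.
  by apply: sumr_ge0 => j _; exact: nc_ge0.
by apply: ler_sum => i _; apply: sum_sqr_le => j; exact: nc_ge0.
Qed.

Lemma nc_le_frob (m n : nat) (X : 'M[C]_(m, n)) i j : nc (X i j) <= frob X.
Proof.
rewrite frob_nm -(ger0_norm (nc_ge0 (X i j))) -sqrtr_sqr ler_sqrt; last first.
  by apply: sumr_ge0 => k _; apply: sumr_ge0 => l _; exact: sqr_ge0.
rewrite (bigD1 i) //= (bigD1 j) //= -addrA lerDl addr_ge0 //.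
  by apply: sumr_ge0 => k _; exact: sqr_ge0.
by apply: sumr_ge0 => k _; apply: sumr_ge0 => l _; exact: sqr_ge0.
Qed.

Lemma nm_le_frob (m n : nat) (X : 'M[C]_(m, n)) : nm X <= (m * n)%:R * frob X.
Proof.
apply: (@le_trans _ _ (\sum_(i < m) \sum_(j < n) frob X)).
  by apply: ler_sum => i _; apply: ler_sum => j _; exact: nc_le_frob.
rewrite (eq_bigr (fun _ => frob X *+ n)); last by move=> i _; rewrite sumr_const card_ord.
by rewrite sumr_const card_ord -mulrnA mulr_natl mulnC.
Qed.

Lemma nm1 (m : nat) : nm (1%:M : 'M[C]_m) = m%:R.
Proof.
rewrite /nm (eq_bigr (fun _ => 1)) ?sumr_const ?card_ord //.
move=> i _; rewrite (bigD1 i) //= big1 ?addr0 ?mxE ?eqxx ?nc_nat //.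
by move=> j /negbTE; rewrite mxE eq_sym => ->; rewrite nc_nat.
Qed.

End NC.

Section CV.
Variable R : realType.
Local Notation C := R[i].

Definition cv (u : nat -> C) (l : C) := forall e : R, 0 < e ->
  exists N, forall n, (N <= n)%N -> nc (u n - l) <= e.

Lemma cvR_lim (v : nat -> R) (l : R) :
  (forall e : R, 0 < e -> exists N, forall n, (N <= n)%N -> `|v n - l| <= e) ->
  limn v = l.
Proof.
move=> h; apply: cvg_lim => //; apply/cvgrPdist_le => e e0.
have [N HN] := h e e0; exists N => // n /= Hn; rewrite distrC; exact: HN.
Qed.

Lemma ReB (x y : C) : complex.Re (x - y) = complex.Re x - complex.Re y.
Proof. by case: x; case: y. Qed.
Lemma ImB (x y : C) : complex.Im (x - y) = complex.Im x - complex.Im y.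
Proof. by case: x; case: y. Qed.

Lemma cv_clim u l : cv u l -> clim u = l.
Proof.
move=> h; rewrite /clim (@cvR_lim _ (complex.Re l)); last first.
  move=> e e0; have [N HN] := h e e0; exists N => n /HN; apply: le_trans.
  by rewrite -ReB; apply: nc_Re.
rewrite (@cvR_lim _ (complex.Im l)); last first.
  move=> e e0; have [N HN] := h e e0; exists N => n /HN; apply: le_trans.
  by rewrite -ImB; apply: nc_Im.
by clear h; case: l.
Qed.

Lemma cvgR_dist (v : nat -> R) : cvgn v ->
  forall e : R, 0 < e -> exists N, forall n, (N <= n)%N -> `|v n - limn v| <= e.
Proof.
move=> /cvgrPdist_le h e e0; have [N _ HN] := h e e0; exists N => n Hn.
by rewrite distrC; apply: HN.
Qed.

Lemma cv_series (t : nat -> C) (b : nat -> R) :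
  (forall k, nc (t k) <= b k) -> cvgn (series b) ->
  cv (fun N => \sum_(k < N) t k) (clim (fun N => \sum_(k < N) t k)).
Proof.
move=> tb cb.
have b0 k : 0 <= b k by apply: le_trans (nc_ge0 _) (tb k).
have hRe : cvgn (series (fun k => complex.Re (t k))).
  apply: (@normed_cvg _ R^o); apply: (series_le_cvg _ b0 _ cb) => //= k.
  exact: le_trans (nc_Re _) (tb k).
have hIm : cvgn (series (fun k => complex.Im (t k))).
  apply: (@normed_cvg _ R^o); apply: (series_le_cvg _ b0 _ cb) => //= k.
  exact: le_trans (nc_Im _) (tb k).
have eRe : (fun N => complex.Re (\sum_(k < N) t k)) = series (fun k => complex.Re (t k)).
  by apply/funext => N; rewrite Re_sum /series /= big_mkord.
have eIm : (fun N => complex.Im (\sum_(k < N) t k)) = series (fun k => complex.Im (t k)).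
  by apply/funext => N; rewrite Im_sum /series /= big_mkord.
move=> e e0.
have e20 : 0 < e / 2 by rewrite divr_gt0.
have [N1 H1] := cvgR_dist hRe e20.
have [N2 H2] := cvgR_dist hIm e20.
exists (maxn N1 N2) => n; rewrite geq_max => /andP[n1 n2].
apply: le_trans (nc_ReIm _) _; rewrite /clim eRe eIm.
rewrite [e]splitr; apply: lerD.
  by move: (H1 n n1); rewrite ReB /= Re_sum /series /= big_mkord.
by move: (H2 n n2); rewrite ImB /= Im_sum /series /= big_mkord.
Qed.


Lemma key_le (a x y e : R) : 0 <= x -> x <= a -> 0 <= y -> y <= e / (a + 1) ->
  0 < e -> x * y <= e.
Proof.
move=> x0 xa y0 ye e0.
have a0 : 0 <= a by apply: le_trans xa.
have a1 : 0 < a + 1 by rewrite ltr_wpDl.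
apply: le_trans (ler_pM x0 y0 xa ye) _.
by rewrite mulrA ler_pdivrMr // [a * e]mulrC ler_pM2l // lerDl.
Qed.

End CV.

Lemma finite_N (I : finType) (Q : I -> nat -> Prop) :
  (forall i, exists N, forall n, (N <= n)%N -> Q i n) ->
  exists N, forall i n, (N <= n)%N -> Q i n.
Proof.
move=> /choice [f Hf]; exists (\big[maxn/0%N]_i f i) => i n Hn; apply: Hf.
apply: (@leq_trans (\big[maxn/0%N]_i f i)) => //; exact: leq_bigmax.
Qed.

Section CValg.
Variable R : realType.
Local Notation C := R[i].
Implicit Types u v : nat -> C.
Implicit Types c l k : C.

Lemma half_gt0 (e : R) : 0 < e -> 0 < e / 2.
Proof. by move=> e0; rewrite divr_gt0. Qed.

Lemma cv_cst c : cv (fun _ => c) c.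
Proof. by move=> e e0; exists 0%N => n _; rewrite subrr nc0 ltW. Qed.

Lemma cv_add u v l k : cv u l -> cv v k -> cv (fun n => u n + v n) (l + k).
Proof.
move=> hu hv e e0; have [N1 H1] := hu _ (half_gt0 e0); have [N2 H2] := hv _ (half_gt0 e0).
exists (maxn N1 N2) => n; rewrite geq_max => /andP[n1 n2].
rewrite opprD addrACA; apply: le_trans (ncD _ _) _.
by rewrite [e]splitr lerD ?H1 ?H2.
Qed.

Lemma cv_opp u l : cv u l -> cv (fun n => - u n) (- l).
Proof. by move=> hu e /hu [N HN]; exists N => n /HN; rewrite -opprD ncN. Qed.

Lemma cv_sub u v l k : cv u l -> cv v k -> cv (fun n => u n - v n) (l - k).
Proof. by move=> hu hv; apply: cv_add => //; apply: cv_opp. Qed.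

Lemma cv_scal c u l : cv u l -> cv (fun n => c * u n) (c * l).
Proof.
move=> hu e e0.
have e1 : 0 < e / (nc c + 1) by rewrite divr_gt0 // ltr_wpDl ?nc_ge0.
have [N HN] := hu _ e1; exists N => n /HN H.
rewrite -mulrBr ncM; apply: (key_le (nc_ge0 c) (lexx _) (nc_ge0 _) H e0).
Qed.

Lemma cv_mul u v l k : cv u l -> cv v k -> cv (fun n => u n * v n) (l * k).
Proof.
move=> hu hv e e0.
have e2 := half_gt0 e0.
have e1 : 0 < e / 2 / (nc k + 1) by rewrite divr_gt0 // ltr_wpDl ?nc_ge0.
have e3 : 0 < e / 2 / (nc l + 1 + 1) by rewrite divr_gt0 // ltr_wpDl ?addr_ge0 ?nc_ge0.
have [N1 H1] := hu _ ltr01; have [N2 H2] := hu _ e1; have [N3 H3] := hv _ e3.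
exists (maxn N1 (maxn N2 N3)) => n; rewrite !geq_max => /and3P[n1 n2 n3].
have -> : u n * v n - l * k = u n * (v n - k) + (u n - l) * k.
  by rewrite mulrBr mulrBl addrA subrK.
apply: le_trans (ncD _ _) _; rewrite [e]splitr !ncM; apply: lerD.
  apply: key_le (nc_ge0 _) _ (nc_ge0 _) (H3 n n3) e2.
  rewrite -[u n](subrK l); apply: le_trans (ncD _ _) _.
  by rewrite addrC lerD2l H1.
by rewrite mulrC; apply: key_le (nc_ge0 _) (lexx _) (nc_ge0 _) (H2 n n2) e2.
Qed.

Lemma cv_shift u l : cv (fun n => u n.+1) l -> cv u l.
Proof. by move=> hu e /hu [N HN]; exists N.+1 => n Hn; rewrite -(prednK (leq_ltn_trans (leq0n N) Hn)) HN // -ltnS prednK // (leq_ltn_trans (leq0n N) Hn). Qed.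

Lemma cv_unique u l k : cv u l -> cv u k -> l = k.
Proof. by move=> /cv_clim <- /cv_clim <-. Qed.

Lemma cv_ext u v l : (forall n, u n = v n) -> cv u l -> cv v l.
Proof. by move=> /funext ->. Qed.

End CValg.

Section CVM.
Variable R : realType.
Local Notation C := R[i].

Definition cvM (m n : nat) (U : nat -> 'M[C]_(m, n)) (L : 'M[C]_(m, n)) :=
  forall e : R, 0 < e -> exists N, forall k, (N <= k)%N -> nm (U k - L) <= e.

Variables m n : nat.
Implicit Types U V : nat -> 'M[C]_(m, n).
Implicit Types L K W M : 'M[C]_(m, n).

Lemma cvM_entry U L : (forall i j, cv (fun k => U k i j) (L i j)) -> cvM U L.
Proof.
move=> h e e0.
have e1 : 0 < e / ((m * n)%:R + 1) by rewrite divr_gt0 // ltr_wpDl.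
have h2 : forall ij : 'I_m * 'I_n, exists N, forall k, (N <= k)%N ->
    nc (U k ij.1 ij.2 - L ij.1 ij.2) <= e / ((m * n)%:R + 1).
  by move=> [i j]; exact: h.
have [N HN] := finite_N h2; exists N => k Hk.
apply: (@le_trans _ _ (\sum_(i < m) \sum_(j < n) (e / ((m * n)%:R + 1)))).
  by apply: ler_sum => i _; apply: ler_sum => j _; rewrite !mxE; exact: (HN (i, j) k Hk).
rewrite sumr_const card_ord sumr_const card_ord -mulrnA.
have -> : forall x : R, x *+ (n * m) = (m * n)%:R * x by move=> x; rewrite mulr_natl mulnC.
exact: (key_le (ler0n _ _) (lexx _) (ltW e1) (lexx _) e0).
Qed.

Lemma cvM_inv U L : cvM U L -> forall i j, cv (fun k => U k i j) (L i j).
Proof.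
move=> h i j e /h [N HN]; exists N => k /HN; apply: le_trans.
by have := nm_entry (U k - L) i j; rewrite !mxE.
Qed.

Lemma cvM_unique U L K : cvM U L -> cvM U K -> L = K.
Proof.
move=> h1 h2; apply/matrixP => i j.
exact: cv_unique (cvM_inv h1 i j) (cvM_inv h2 i j).
Qed.

Lemma cvM_cst L : cvM (fun _ => L) L.
Proof. by move=> e e0; exists 0%N => k _; rewrite subrr nm0 ltW. Qed.

Lemma cvM_add U V L K : cvM U L -> cvM V K -> cvM (fun k => U k + V k) (L + K).
Proof.
move=> hu hv e e0; have [N1 H1] := hu _ (half_gt0 e0); have [N2 H2] := hv _ (half_gt0 e0).
exists (maxn N1 N2) => k; rewrite geq_max => /andP[n1 n2].
rewrite opprD addrACA; apply: le_trans (nmD _ _) _.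
by rewrite [e]splitr lerD ?H1 ?H2.
Qed.

Lemma cvM_opp U L : cvM U L -> cvM (fun k => - U k) (- L).
Proof. by move=> hu e /hu [N HN]; exists N => k /HN; rewrite -opprD nmN. Qed.

Lemma cvM_sub U V L K : cvM U L -> cvM V K -> cvM (fun k => U k - V k) (L - K).
Proof. by move=> hu hv; apply: cvM_add => //; apply: cvM_opp. Qed.

Lemma cvM_le U L W c : cvM U L -> (forall k, nm (U k - W) <= c) -> nm (L - W) <= c.
Proof.
move=> hu hb; apply/ler_addgt0Pr => e e0.
have [N HN] := hu e e0.
have -> : L - W = (U N - W) - (U N - L) by rewrite opprB [RHS]addrC addrA subrK.
apply: le_trans (nmD _ _) _; rewrite nmN lerD ?hb //; exact: HN.
Qed.

Lemma cvM_ext U V L : (forall k, U k = V k) -> cvM U L -> cvM V L.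
Proof. by move=> /funext ->. Qed.

Lemma cvM_scal (u : nat -> C) l (M : 'M[C]_(m, n)) :
  cv u l -> cvM (fun k => u k *: M) (l *: M).
Proof.
move=> hu e e0.
have e1 : 0 < e / (nm M + 1) by rewrite divr_gt0 // ltr_wpDl ?nm_ge0.
have [N HN] := hu _ e1; exists N => k /HN H.
rewrite -scalerBl nmZ mulrC; exact: (key_le (nm_ge0 M) (lexx _) (nc_ge0 _) H e0).
Qed.

Lemma cvM_sum (I : finType) (U : I -> nat -> 'M[C]_(m, n)) (L : I -> 'M[C]_(m, n)) :
  (forall i, cvM (U i) (L i)) -> cvM (fun k => \sum_i U i k) (\sum_i L i).
Proof.
move=> h.
suff: forall s : seq I, cvM (fun k => \sum_(i <- s) U i k) (\sum_(i <- s) L i).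
  by move=> /(_ (index_enum I)).
elim=> [|x s IH].
  by apply: (cvM_ext (U := fun _ => 0)) => [k|]; rewrite ?big_nil //; apply: cvM_cst.
apply: (cvM_ext (U := fun k => U x k + \sum_(i <- s) U i k)) => [k|]; first by rewrite big_cons.
by rewrite big_cons; apply: cvM_add.
Qed.

End CVM.

Lemma cvM_mull (R : realType) (m n p : nat) (A : 'M[R[i]]_(m, n)) (U : nat -> 'M[R[i]]_(n, p)) L :
  cvM U L -> cvM (fun k => A *m U k) (A *m L).
Proof.
move=> hu e e0.
have e1 : 0 < e / (nm A + 1) by rewrite divr_gt0 // ltr_wpDl ?nm_ge0.
have [N HN] := hu _ e1; exists N => k /HN H.
rewrite -mulmxBr; apply: le_trans (nm_mul _ _) _.
exact: (key_le (nm_ge0 A) (lexx _) (nm_ge0 _) H e0).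
Qed.

Lemma cvM_mulr (R : realType) (m n p : nat) (A : 'M[R[i]]_(n, p)) (U : nat -> 'M[R[i]]_(m, n)) L :
  cvM U L -> cvM (fun k => U k *m A) (L *m A).
Proof.
move=> hu e e0.
have e1 : 0 < e / (nm A + 1) by rewrite divr_gt0 // ltr_wpDl ?nm_ge0.
have [N HN] := hu _ e1; exists N => k /HN H.
rewrite -mulmxBl; apply: le_trans (nm_mul _ _) _; rewrite mulrC.
exact: (key_le (nm_ge0 A) (lexx _) (nm_ge0 _) H e0).
Qed.

Section ExpR.
Variable R : realType.

Lemma sum_exp_le (x : R) N : 0 <= x -> \sum_(k < N) (k`!%:R)^-1 * x ^+ k <= expR x.
Proof.
move=> x0.
have -> : \sum_(k < N) (k`!%:R)^-1 * x ^+ k = series (exp_coeff x) N.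
  by rewrite /series /= big_mkord; apply: eq_bigr => k _; rewrite /exp_coeff /= mulrC.
apply: (nondecreasing_cvgn_le _ (is_cvg_series_exp_coeff x)).
by apply: nondecreasing_series => n _ _; apply: exp_coeff_ge0.
Qed.

Lemma cvg_series_scaled (c x : R) :
  cvgn (series (fun k => c * ((k`!%:R)^-1 * x ^+ k))).
Proof.
rewrite (_ : (fun k => _) = c *: exp_coeff x).
  exact: is_cvg_seriesZ (is_cvg_series_exp_coeff x).
apply/funext => k /=; rewrite /exp_coeff /= mulrC.
rewrite -[RHS]/(c * (x ^+ k / k`!%:R)).
by rewrite mulrC [x ^+ k * _]mulrC.
Qed.

End ExpR.

Section ExpM.
Variable R : realType.
Local Notation C := R[i].
Variable m : nat.
Implicit Types X Y : 'M[C]_m.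

Definition S N X := \sum_(k < N) (k`!%:R)^-1 *: X ^+ k.
Definition s N (z : C) := \sum_(k < N) (k`!%:R)^-1 * z ^+ k.

Lemma nm_powl X Y k : nm (X ^+ k *m Y) <= nm X ^+ k * nm Y.
Proof.
elim: k => [|k IH]; first by rewrite expr0 mul1mx mul1r.
rewrite exprS -mulmxE -mulmxA; apply: le_trans (nm_mul _ _) _.
by rewrite exprS -mulrA ler_wpM2l ?nm_ge0.
Qed.

Lemma nm_powr X Y k : nm (Y *m X ^+ k) <= nm Y * nm X ^+ k.
Proof.
elim: k => [|k IH]; first by rewrite expr0 mulmx1 mulr1.
rewrite exprSr -mulmxE mulmxA; apply: le_trans (nm_mul _ _) _.
by rewrite exprSr mulrA ler_wpM2r ?nm_ge0.
Qed.

Lemma nm_pow X k : nm (X ^+ k) <= m%:R * nm X ^+ k.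
Proof.
have := nm_powl X 1%:M k; rewrite mulmx1 nm1 mulrC; exact.
Qed.

Lemma expm_cv X : cvM (fun N => S N X) (expm X).
Proof.
apply: cvM_entry => i j.
have H := @cv_series R (fun k => ((k`!%:R)^-1 *: X ^+ k) i j)
  (fun k => m%:R * ((k`!%:R)^-1 * nm X ^+ k)) _ (@cvg_series_scaled R _ _).
have E : (fun N => \sum_(k < N) ((k`!%:R)^-1 *: X ^+ k) i j) = (fun N => S N X i j).
  by apply/funext => N; rewrite /S summxE.
rewrite E in H; rewrite /expm mxE; apply: H.
move=> k; rewrite mxE ncM nc_inv_fact mulrCA.
apply: ler_wpM2l; first by rewrite invr_ge0 ler0n.
exact: le_trans (nm_entry _ i j) (nm_pow X k).
Qed.

Lemma cexp_cv z : cv (fun N => s N z) (cexp z).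
Proof.
have H := @cv_series R (fun k => (k`!%:R)^-1 * z ^+ k)
  (fun k => 1 * ((k`!%:R)^-1 * nc z ^+ k)) _ (@cvg_series_scaled R _ _).
apply: H => k; rewrite mul1r ncM nc_inv_fact.
apply: ler_wpM2l; first by rewrite invr_ge0 ler0n.
elim: k => [|k IH]; first by rewrite !expr0 (@nc_nat R 1).
by rewrite !exprS ncM ler_wpM2l ?nc_ge0.
Qed.

End ExpM.

Lemma tri (V : zmodType) (g : nat -> nat -> V) N :
  \sum_(0 <= k < N) \sum_(0 <= i < k.+1) g (k - i)%N i =
  \sum_(0 <= a < N) \sum_(0 <= b < N - a) g a b.
Proof.
elim: N => [|N IH]; first by rewrite !big_geq.
rewrite big_nat_recr //= IH [RHS]big_nat_recr //= subSnn.
rewrite big_nat1.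
have -> : \sum_(0 <= a < N) \sum_(0 <= b < N.+1 - a) g a b =
          \sum_(0 <= a < N) \sum_(0 <= b < N - a) g a b + \sum_(0 <= a < N) g a (N - a)%N.
  rewrite -big_split /=; apply: eq_big_nat => a /andP[_ aN].
  by rewrite subSn ?(ltnW aN) // big_nat_recr.
rewrite -addrA; congr (_ + _).
rewrite big_nat_rev /=.
rewrite (eq_big_nat _ _ (F2 := fun i => g i (N - i)%N)); last first.
  by move=> i /andP[_ iN]; rewrite add0n subSS subKn.
by rewrite big_nat_recr //= subnn.
Qed.

Definition gs (F : numFieldType) N (z : F) := \sum_(k < N) (k`!%:R)^-1 * z ^+ k.

Lemma gsD (F : numFieldType) (x y : F) N :
  gs N (x + y) = \sum_(0 <= a < N) \sum_(0 <= b < N - a)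
     (((a`!%:R)^-1 * x ^+ a) * ((b`!%:R)^-1 * y ^+ b)).
Proof.
rewrite /gs -(big_mkord xpredT (fun k => (k`!%:R)^-1 * (x + y) ^+ k)) -(tri (fun a b => ((a`!%:R)^-1 * x ^+ a) * ((b`!%:R)^-1 * y ^+ b))).
apply: eq_big_nat => k _; rewrite exprDn mulr_sumr big_mkord; apply: eq_bigr => i _.
have ik : (i <= k)%N by rewrite -ltnS ltn_ord.
have HF : ('C(k, i))%:R * ((i`!)%:R * ((k - i)`!)%:R) = (k`!)%:R :> F.
  by rewrite -!natrM bin_fact.
rewrite -HF -mulr_natl.
have h1 : ('C(k, i))%:R != 0 :> F by rewrite pnatr_eq0 -lt0n bin_gt0.
have h2 : (i`!)%:R != 0 :> F by rewrite pnatr_eq0 -lt0n fact_gt0.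
have h3 : ((k - i)`!)%:R != 0 :> F by rewrite pnatr_eq0 -lt0n fact_gt0.
by field; rewrite h1 h2 h3.
Qed.

Lemma prod_sub (F : numFieldType) (x y : F) N :
  gs N x * gs N y - gs N (x + y) = \sum_(0 <= a < N) \sum_(N - a <= b < N)
     (((a`!%:R)^-1 * x ^+ a) * ((b`!%:R)^-1 * y ^+ b)).
Proof.
rewrite gsD /gs mulr_suml -(big_mkord xpredT (fun a => (a`!%:R)^-1 * x ^+ a * _)).
rewrite -sumrB; apply: eq_big_nat => a /andP[_ aN].
rewrite mulr_sumr -(big_mkord xpredT (fun b => (a`!%:R)^-1 * x ^+ a * ((b`!%:R)^-1 * y ^+ b))).
rewrite (@big_cat_nat _ _ _ (N - a)) ?leq_subr //=.
by rewrite addrAC subrr add0r.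
Qed.

Section CexpD.
Variable R : realType.
Local Notation C := R[i].

Lemma ncX (z : C) k : nc (z ^+ k) = nc z ^+ k.
Proof.
elim: k => [|k IH]; first by rewrite !expr0 (@nc_nat R 1).
by rewrite !exprS ncM IH.
Qed.

Lemma s_gs N (z : C) : s N z = gs N z.
Proof. by []. Qed.

Lemma gs_cvg (X : R) : (fun N => gs N X) @ \oo --> expR X.
Proof.
have -> : (fun N => gs N X) = series (exp_coeff X).
  apply/funext => N; rewrite /gs /series /= big_mkord.
  by apply: eq_bigr => k _; rewrite /exp_coeff /= mulrC.
exact: is_cvg_series_exp_coeff.
Qed.

Lemma cexpD (x y : C) : cexp (x + y) = cexp x * cexp y.
Proof.
pose X := nc x; pose Y := nc y.
have hd : cv (fun N => s N x * s N y - s N (x + y)) 0.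
  move=> e e0.
  have hc : (fun N => gs N X * gs N Y - gs N (X + Y)) @ \oo --> (0 : R).
    rewrite -(subrr (expR X * expR Y)) -[X in _ - X]expRD.
    by apply: cvgB; [apply: cvgM|]; apply: gs_cvg.
  have [N _ HN] := (cvgrPdist_le _ _).1 hc e e0.
  exists N => n /HN; rewrite sub0r normrN; apply: le_trans.
  rewrite subr0 !s_gs prod_sub prod_sub.
  apply: le_trans (nc_sum _ _ _) _; apply: le_trans (real_ler_norm _); last by apply: num_real.
  apply: ler_sum => a _; apply: le_trans (nc_sum _ _ _) _; apply: ler_sum => b _.
  by rewrite !ncM !nc_inv_fact !ncX.
have h3 := cv_sub (cv_mul (cexp_cv x) (cexp_cv y)) (cexp_cv (x + y)).
have /eqP := cv_unique h3 hd; rewrite subr_eq0 => /eqP ->.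
by [].
Qed.

End CexpD.

Section Est.
Variable R : realType.
Local Notation C := R[i].
Variable m : nat.
Implicit Types A B : 'M[C]_m.

Fixpoint Tm A B k : 'M[C]_m :=
  match k with 0 => 0 | k'.+1 => Tm A B k' *m A + A ^+ k' *m B end.

Lemma zid (V : zmodType) (u pa pb ta tb : V) : u - pa - (ta + pb) = tb + (u - (pa + pb) - (ta + tb)).
Proof.
rewrite [RHS]addrC !opprD !addrA subrK.
by rewrite addrAC.
Qed.

Lemma eS (M : 'M[C]_m) k : M ^+ k.+1 = M ^+ k *m M.
Proof. by rewrite exprSr. Qed.

Definition Dm A B k := (A + B) ^+ k - A ^+ k - Tm A B k.

Lemma Dm_rec A B k : Dm A B k.+1 = Tm A B k *m B + Dm A B k *m (A + B).
Proof.
rewrite /Dm /= !eS !mulmxBl (mulmxDr (A ^+ k)) (mulmxDr (Tm A B k)).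
exact: zid.
Qed.

Lemma pow_le (x y : R) k : 0 <= x -> x <= y -> x ^+ k <= y ^+ k.
Proof.
move=> x0 xy; have y0 : 0 <= y by apply: le_trans xy.
by apply: lerXn2r; rewrite ?nnegrE.
Qed.

Lemma predpow (c : R) k : k%:R * c ^+ k.-1 * c = k%:R * c ^+ k.
Proof. by case: k => [|k]; rewrite ?mul0r ?mulr0 // -mulrA -exprSr. Qed.

Lemma predpow2 (c : R) k : (k * k.-1)%:R * c ^+ k.-2 * c = (k * k.-1)%:R * c ^+ k.-1.
Proof. by case: k => [|[|k]]; rewrite ?muln0 ?mul0r ?mul0n // -mulrA -exprSr. Qed.

Lemma Tm_bound A B k : nm (Tm A B k) <= k%:R * (nm A + nm B) ^+ k.-1 * nm B.
Proof.
set c := nm A + nm B.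
have a0 := nm_ge0 A; have b0 := nm_ge0 B.
have ac : nm A <= c by rewrite lerDl.
elim: k => [|k IH] /=; first by rewrite nm0 !mul0r.
apply: le_trans (nmD _ _) _.
have h1 : nm (Tm A B k *m A) <= k%:R * c ^+ k * nm B.
  apply: le_trans (nm_mul _ _) _.
  apply: le_trans (ler_pM (nm_ge0 _) a0 IH ac) _.
  by rewrite mulrAC predpow.
have h2 : nm (A ^+ k *m B) <= c ^+ k * nm B.
  apply: le_trans (nm_powl _ _ _) _; apply: ler_wpM2r => //; exact: pow_le.
apply: le_trans (lerD h1 h2) _.
by rewrite -natr1 !mulrDl mul1r.
Qed.

Lemma Dm_bound A B k : nm (Dm A B k) <= (k * k.-1)%:R * (nm A + nm B) ^+ k.-2 * nm B ^+ 2.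
Proof.
set c := nm A + nm B.
have a0 := nm_ge0 A; have b0 := nm_ge0 B.
have c0 : 0 <= c by rewrite addr_ge0.
elim: k => [|k IH].
  by rewrite /Dm /= !expr0 subrr sub0r oppr0 nm0 !mul0r.
rewrite Dm_rec; apply: le_trans (nmD _ _) _.
have h1 : nm (Tm A B k *m B) <= k%:R * (c ^+ k.-1 * nm B ^+ 2).
  apply: le_trans (nm_mul _ _) _.
  apply: le_trans (ler_wpM2r b0 (Tm_bound A B k)) _.
  by rewrite expr2 !mulrA.
have h2 : nm (Dm A B k *m (A + B)) <= (k * k.-1)%:R * (c ^+ k.-1 * nm B ^+ 2).
  apply: le_trans (nm_mul _ _) _.
  apply: le_trans (ler_pM (nm_ge0 _) (nm_ge0 _) IH (nmD A B)) _.
  by rewrite mulrAC predpow2 mulrA.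
apply: le_trans (lerD h1 h2) _.
rewrite -mulrDl -natrD /= -mulrA; apply: ler_wpM2r.
  by rewrite mulr_ge0 ?exprn_ge0.
by rewrite ler_nat; case: k {IH h1 h2} => // k /=; lia.
Qed.

End Est.

Section Est2.
Variable R : realType.
Local Notation C := R[i].
Variable m : nat.
Implicit Types A B : 'M[C]_m.

Lemma sum_f_le (c : R) N : 0 <= c ->
  \sum_(k < N) (k`!%:R)^-1 * ((k * k.-1)%:R * c ^+ k.-2) <= expR c.
Proof.
move=> c0.
set f := fun k : nat => (k`!%:R)^-1 * ((k * k.-1)%:R * c ^+ k.-2).
have f0 k : 0 <= f k by rewrite /f mulr_ge0 ?invr_ge0 ?mulr_ge0 ?exprn_ge0.
apply: (@le_trans _ _ (\sum_(k < N.+2) f k)).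
  rewrite big_ord_recr /= big_ord_recr /= -addrA lerDl.
  by rewrite addr_ge0.
rewrite big_ord_recl big_ord_recl /f /= !mul0r !mulr0 !add0r.
apply: le_trans (sum_exp_le N c0); rewrite le_eqVlt; apply/orP; left; apply/eqP.
apply: eq_bigr => k _ /=.
rewrite /bump /= !add1n.
have h1 : (k`!%:R : R) != 0 by rewrite pnatr_eq0 -lt0n fact_gt0.
rewrite !factS !natrM.
have h2 : (k.+1%:R : R) != 0 by rewrite pnatr_eq0.
have h3 : (k.+2%:R : R) != 0 by rewrite pnatr_eq0.
field; rewrite h1 /=; apply/andP; split; apply: lt0r_neq0; have := ler0n R k; lra.
Qed.

Lemma est A B N :
  nm (S N (A + B) - S N A - \sum_(k < N) (k`!%:R)^-1 *: Tm A B k)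
    <= nm B ^+ 2 * expR (nm A + nm B).
Proof.
have -> : S N (A + B) - S N A - \sum_(k < N) (k`!%:R)^-1 *: Tm A B k =
          \sum_(k < N) (k`!%:R)^-1 *: Dm A B k.
  by rewrite /S -!sumrB; apply: eq_bigr => k _; rewrite /Dm !scalerBr.
apply: le_trans (nm_sum _ _ _) _.
apply: (@le_trans _ _ (\sum_(k < N) (k`!%:R)^-1 *
   ((k * k.-1)%:R * (nm A + nm B) ^+ k.-2) * nm B ^+ 2)).
  apply: ler_sum => k _; rewrite nmZ nc_inv_fact -!mulrA; apply: ler_wpM2l.
    by rewrite invr_ge0 ler0n.
  by rewrite mulrA; apply: Dm_bound.
rewrite -mulr_suml mulrC; apply: ler_wpM2l; first exact: sqr_ge0.
by apply: sum_f_le; rewrite addr_ge0 ?nm_ge0.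
Qed.

End Est2.

Section Spec.
Variable R : realType.
Local Notation C := R[i].
Variables (m r : nat) (A : 'M[C]_m) (a : 'I_r -> C) (P : 'I_r -> 'M[C]_m).
Hypothesis P_proj : forall i j, P i *m P j = if i == j then P i else 0.
Hypothesis P_sum : \sum_i P i = 1%:M.
Hypothesis A_dec : A = \sum_i a i *: P i.

Lemma sum_delta (F : 'I_r -> 'M[C]_m) j : \sum_p (if j == p then F p else 0) = F j.
Proof.
rewrite (bigD1 j) //= eqxx big1 ?addr0 // => p /negbTE.
by rewrite eq_sym => ->.
Qed.

Lemma Pl (f : 'I_r -> C) k : P k *m (\sum_p f p *: P p) = f k *: P k.
Proof.
rewrite mulmx_sumr (bigD1 k) //= -scalemxAr P_proj eqxx big1 ?addr0 //.
by move=> p /negbTE hp; rewrite -scalemxAr P_proj eq_sym hp scaler0.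
Qed.

Lemma Pr (f : 'I_r -> C) k : (\sum_p f p *: P p) *m P k = f k *: P k.
Proof.
rewrite mulmx_suml (bigD1 k) //= -scalemxAl P_proj eqxx big1 ?addr0 //.
by move=> p /negbTE hp; rewrite -scalemxAl P_proj hp scaler0.
Qed.

Lemma diag_mul (f g : 'I_r -> C) :
  (\sum_p f p *: P p) *m (\sum_q g q *: P q) = \sum_p (f p * g p) *: P p.
Proof.
rewrite mulmx_suml; apply: eq_bigr => p _.
by rewrite -scalemxAl Pl scalerA.
Qed.

Lemma A_pow k : A ^+ k = \sum_p (a p ^+ k) *: P p.
Proof.
elim: k => [|k IH].
  rewrite expr0 (eq_bigr _ (fun p _ => scale1r (P p))) P_sum //.
by rewrite eS IH [X in _ *m X]A_dec diag_mul; apply: eq_bigr => p _; rewrite exprSr.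
Qed.

Lemma S_A N : S N A = \sum_p s N (a p) *: P p.
Proof.
rewrite /S (eq_bigr (fun k : 'I_N => \sum_p ((k`!%:R)^-1 * a p ^+ k) *: P p)); last first.
  by move=> k _; rewrite A_pow scaler_sumr; apply: eq_bigr => p _; rewrite scalerA.
rewrite exchange_big /=; apply: eq_bigr => p _.
by rewrite /s scaler_suml.
Qed.

Lemma expm_A : expm A = \sum_p cexp (a p) *: P p.
Proof.
apply: cvM_unique (expm_cv A) _.
apply: (cvM_ext (U := fun N => \sum_p s N (a p) *: P p)) => [N|]; first by rewrite S_A.
by apply: cvM_sum => p; apply: cvM_scal; apply: cexp_cv.
Qed.

Fixpoint tau (x y : C) k := match k with 0 => 0 | k'.+1 => tau x y k' * y + x ^+ k' end.

Lemma Tm_spec B k : Tm A B k = \sum_p \sum_q tau (a p) (a q) k *: (P p *m B *m P q).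
Proof.
elim: k => [|k IH] /=.
  by rewrite big1 // => p _; rewrite big1 // => q _; rewrite scale0r.
have h1 : Tm A B k *m A = \sum_p \sum_q (tau (a p) (a q) k * a q) *: (P p *m B *m P q).
  rewrite IH mulmx_suml; apply: eq_bigr => p _; rewrite mulmx_suml; apply: eq_bigr => q _.
  by rewrite -scalemxAl -mulmxA [X in P q *m X]A_dec Pl -scalemxAr scalerA.
have h2 : A ^+ k *m B = \sum_p \sum_q (a p ^+ k) *: (P p *m B *m P q).
  rewrite A_pow mulmx_suml; apply: eq_bigr => p _.
  rewrite -scalemxAl -scaler_sumr; congr (_ *: _).
  by rewrite -mulmx_sumr P_sum mulmx1.
rewrite h1 h2 -big_split; apply: eq_bigr => p _; rewrite -big_split; apply: eq_bigr => q _.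
by rewrite scalerDl.
Qed.

Definition phi N (x y : C) := \sum_(k < N) (k`!%:R)^-1 * tau x y k.

Lemma Lin_sum B N : \sum_(k < N) (k`!%:R)^-1 *: Tm A B k =
  \sum_p \sum_q phi N (a p) (a q) *: (P p *m B *m P q).
Proof.
rewrite (eq_bigr (fun k : 'I_N => \sum_p \sum_q ((k`!%:R)^-1 * tau (a p) (a q) k) *: (P p *m B *m P q))); last first.
  move=> k _; rewrite Tm_spec scaler_sumr; apply: eq_bigr => p _.
  by rewrite scaler_sumr; apply: eq_bigr => q _; rewrite scalerA.
rewrite exchange_big /=; apply: eq_bigr => p _.
rewrite exchange_big /=; apply: eq_bigr => q _.
by rewrite /phi scaler_suml.
Qed.

Lemma tau_diff x y k : (x - y) * tau x y k = x ^+ k - y ^+ k.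
Proof.
elim: k => [|k IH] /=; first by rewrite mulr0 !expr0 subrr.
rewrite mulrDr mulrA IH !exprSr; ring.
Qed.

Lemma tau_eq x k : tau x x k = k%:R * x ^+ k.-1.
Proof.
elim: k => [|k IH] /=; first by rewrite mul0r.
rewrite IH; case: k {IH} => [|k] /=; first by ring.
by rewrite exprSr; ring.
Qed.

Lemma phi_same x : cv (fun N => phi N x x) (cexp x).
Proof.
apply: cv_shift; apply: (cv_ext (u := fun N => s N x)); last exact: cexp_cv.
move=> N; rewrite /phi big_ord_recl /= mulr0 add0r /s; apply: eq_bigr => k _.
rewrite tau_eq /bump /= !add0n add1n /= factS natrM.
have Hk : forall j : nat, j%:R * x ^+ j.-1 * x = j%:R * x ^+ j.
  by case=> [|j]; rewrite ?mul0r ?mulr0 // -mulrA -exprSr.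
rewrite Hk.
have h1 : (k`!%:R : C) != 0 by rewrite pnatr_eq0 -lt0n fact_gt0.
have h2 : (k.+1%:R : C) != 0 by rewrite pnatr_eq0.
have h3 : (1 + k%:R : C) != 0 by rewrite addrC natr1.
field; by rewrite h1 h3.
Qed.

Lemma phi_diff x y : x != y -> cv (fun N => phi N x y) ((x - y)^-1 * (cexp x - cexp y)).
Proof.
move=> hxy.
apply: (cv_ext (u := fun N => (x - y)^-1 * (s N x - s N y))); last first.
  by apply: cv_scal; apply: cv_sub; apply: cexp_cv.
move=> N; rewrite /phi /s -sumrB mulr_sumr; apply: eq_bigr => k _.
have hd : x - y != 0 by rewrite subr_eq0.
rewrite -mulrBr -tau_diff.
have h1 : (k`!%:R : C) != 0 by rewrite pnatr_eq0 -lt0n fact_gt0.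
by field; rewrite h1 hd.
Qed.

Definition Phi p q := ell a p q * cexp (a q).

Hypothesis a_inj : injective a.

Lemma PhiE p q : p != q -> Phi p q = (a p - a q)^-1 * (cexp (a p) - cexp (a q)).
Proof.
move=> hpq; rewrite /Phi /ell (negbTE hpq).
have hd : a p - a q != 0 by rewrite subr_eq0 (inj_eq a_inj).
have ex : cexp (a p) = cexp (a p - a q) * cexp (a q) by rewrite -cexpD subrK.
rewrite ex; move: (cexp (a p - a q)) (cexp (a q)) => E Y.
by move: (a p - a q) hd => d hd; field.
Qed.

Lemma Phi_sym p q : Phi p q = cexp (a p) * ell a q p.
Proof.
have [<-|hpq] := eqVneq p q; first by rewrite /Phi /ell eqxx mulrC.
rewrite PhiE // /ell eq_sym (negbTE hpq).
have hd : a p - a q != 0 by rewrite subr_eq0 (inj_eq a_inj).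
have hd' : a q - a p != 0 by rewrite subr_eq0 eq_sym (inj_eq a_inj).
have ey : cexp (a q) = cexp (a q - a p) * cexp (a p) by rewrite -cexpD subrK.
rewrite ey.
have -> : a q - a p = - (a p - a q) by rewrite opprB.
move: (cexp (- (a p - a q))) (cexp (a p)) => E X.
by move: (a p - a q) hd => d hd; field.
Qed.

Lemma phi_cv p q : cv (fun N => phi N (a p) (a q)) (Phi p q).
Proof.
have [<-|hpq] := eqVneq p q.
  by rewrite /Phi /ell eqxx mul1r; apply: phi_same.
by rewrite PhiE //; apply: phi_diff; rewrite (inj_eq a_inj).
Qed.

Definition Lin B := \sum_p \sum_q Phi p q *: (P p *m B *m P q).

Lemma lin_cv B : cvM (fun N => \sum_(k < N) (k`!%:R)^-1 *: Tm A B k) (Lin B).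
Proof.
apply: (cvM_ext (U := fun N => \sum_p \sum_q phi N (a p) (a q) *: (P p *m B *m P q))).
  by move=> N; rewrite Lin_sum.
apply: cvM_sum => p; apply: cvM_sum => q; apply: cvM_scal; exact: phi_cv.
Qed.

Lemma E1 B : nm (expm (A + B) - expm A - Lin B) <= nm B ^+ 2 * expR (nm A + nm B).
Proof.
have h := cvM_sub (cvM_sub (expm_cv (A + B)) (expm_cv A)) (lin_cv B).
have := cvM_le (W := 0) h (fun N => _).
rewrite subr0; apply => N; rewrite subr0; exact: est.
Qed.

End Spec.

Section E2.
Variable R : realType.
Local Notation C := R[i].
Variable m : nat.

Lemma cvM_le_ev (U : nat -> 'M[C]_m) L W c N0 : cvM U L ->
  (forall k, (N0 <= k)%N -> nm (U k - W) <= c) -> nm (L - W) <= c.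
Proof.
move=> hu hb; apply/ler_addgt0Pr => e e0.
have [N HN] := hu e e0.
have -> : L - W = (U (maxn N N0) - W) - (U (maxn N N0) - L) by rewrite opprB [RHS]addrC addrA subrK.
apply: le_trans (nmD _ _) _; rewrite nmN lerD ?hb ?HN // ?leq_maxl ?leq_maxr //.
Qed.

Lemma S0 N : S N.+1 (0 : 'M[C]_m) = 1%:M.
Proof.
rewrite /S big_ord_recl /= expr0 fact0 invr1 scale1r big1 ?addr0 // => k _.
by rewrite exprS mul0r scaler0.
Qed.

Lemma Tm0_sum (X : 'M[C]_m) N : \sum_(k < N.+2) (k`!%:R)^-1 *: Tm 0 X k = X.
Proof.
rewrite big_ord_recl big_ord_recl /= big1 ?addr0.
  by rewrite scaler0 add0r mulmx0 add0r expr0 mul1mx /bump /= factS fact0 muln1 invr1 scale1r.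
by move=> k _; rewrite mulmx0 add0r exprS mul0r mul0mx scaler0.
Qed.

Lemma E2 (X : 'M[C]_m) : nm (expm X - 1%:M - X) <= nm X ^+ 2 * expR (nm X).
Proof.
rewrite -addrA -opprD.
apply: (cvM_le_ev (N0 := 2) (expm_cv X)) => k hk.
case: k hk => [|[|N]] // _.
have := est 0 X N.+2; rewrite add0r nm0 add0r S0 Tm0_sum.
by rewrite opprD addrA.
Qed.

End E2.

Lemma zid2 (V : zmodType) (e f g l : V) : e - f = (e - g - l) - (f - g - l).
Proof. by rewrite [in RHS]opprB addrA subrK opprB addrA subrK. Qed.

Section Core.
Variable R : realType.
Local Notation C := R[i].
Variables (m r : nat) (A : 'M[C]_m) (a : 'I_r -> C) (P : 'I_r -> 'M[C]_m).
Hypothesis P_proj : forall i j, P i *m P j = if i == j then P i else 0.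
Hypothesis P_sum : \sum_i P i = 1%:M.
Hypothesis A_dec : A = \sum_i a i *: P i.
Hypothesis a_inj : injective a.

Definition Kof (g : 'I_r -> 'I_r -> C) := \sum_j \sum_k nc (g j k) * (nm (P j) * nm (P k)).

Lemma Kof_ge0 g : 0 <= Kof g.
Proof.
by apply: sumr_ge0 => j _; apply: sumr_ge0 => k _; rewrite !mulr_ge0 ?nc_ge0 ?nm_ge0.
Qed.

Lemma nm_sand (g : 'I_r -> 'I_r -> C) X :
  nm (\sum_j \sum_k g j k *: (P j *m X *m P k)) <= Kof g * nm X.
Proof.
rewrite /Kof mulr_suml; apply: le_trans (nm_sum _ _ _) _; apply: ler_sum => j _.
rewrite mulr_suml; apply: le_trans (nm_sum _ _ _) _; apply: ler_sum => k _.
rewrite nmZ -mulrA; apply: ler_wpM2l; first exact: nc_ge0.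
apply: le_trans (nm_mul _ _) _; rewrite mulrAC; apply: ler_wpM2r; first exact: nm_ge0.
exact: nm_mul.
Qed.

Lemma Xe X j k : (P j *m X *m P k) *m expm A = cexp (a k) *: (P j *m X *m P k).
Proof. by rewrite -mulmxA (expm_A P_proj P_sum A_dec) Pl // scalemxAr. Qed.

Lemma eX X j k : expm A *m (P j *m X *m P k) = cexp (a j) *: (P j *m X *m P k).
Proof. by rewrite !mulmxA (expm_A P_proj P_sum A_dec) Pr // -!scalemxAl. Qed.

Lemma dcl_e B : dcl a P B *m expm A = Lin a P B.
Proof.
rewrite /dcl /Lin mulmx_suml; apply: eq_bigr => j _; rewrite mulmx_suml.
by apply: eq_bigr => k _; rewrite -scalemxAl Xe scalerA.
Qed.

Lemma e_dcr B : expm A *m dcr a P B = Lin a P B.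
Proof.
rewrite /dcr /Lin mulmx_sumr; apply: eq_bigr => j _; rewrite mulmx_sumr.
by apply: eq_bigr => k _; rewrite -scalemxAr eX scalerA (Phi_sym a_inj); congr (_ *: _); exact: mulrC.
Qed.

Definition Kl := Kof (fun j k => ell a j k).
Definition Kr := Kof (fun j k => ell a k j).

Definition Cst (K : R) := expR (nm A + 1) + K ^+ 2 * expR K * nm (expm A).

Lemma Cst_ge0 K : 0 <= Cst K.
Proof.
apply: addr_ge0; first exact: expR_ge0.
apply: mulr_ge0; last exact: nm_ge0.
by apply: mulr_ge0; [exact: sqr_ge0 | exact: expR_ge0].
Qed.

Lemma bound_aux (K b x : R) (E1 E2 F : 'M[C]_m) (M : 'M[C]_m) : 0 <= K -> 0 <= b -> b <= 1 ->
  0 <= x -> x <= K * b ->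
  nm E1 <= b ^+ 2 * expR (nm A + b) -> nm E2 <= x ^+ 2 * expR x ->
  nm F <= nm E2 * nm M ->
  nm (E1 - F) <= (expR (nm A + 1) + K ^+ 2 * expR K * nm M) * b ^+ 2.
Proof.
move=> K0 b0 b1 x0 xK h1 h2 hF.
apply: le_trans (nmD _ _) _; rewrite nmN mulrDl; apply: lerD.
  apply: le_trans h1 _; rewrite mulrC; apply: ler_wpM2r; first exact: sqr_ge0.
  by rewrite ler_expR lerD2l.
apply: le_trans hF _.
have hx1 : x <= K by apply: le_trans xK _; rewrite ler_piMr.
have h3 : x ^+ 2 <= K ^+ 2 * b ^+ 2.
  by rewrite -exprMn; apply: pow_le.
apply: le_trans (ler_wpM2r (nm_ge0 M) h2) _.
have h4 : expR x * nm M <= expR K * nm M.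
  by apply: ler_wpM2r; [exact: nm_ge0 | rewrite ler_expR].
have := ler_pM (sqr_ge0 x) (mulr_ge0 (expR_ge0 x) (nm_ge0 M)) h3 h4.
rewrite !mulrA => H; apply: le_trans H _.
by rewrite le_eqVlt; apply/orP; left; apply/eqP; ring.
Qed.

Lemma Core1 B : nm B <= 1 ->
  nm (expm (A + B) - expm (dcl a P B) *m expm A) <= Cst Kl * nm B ^+ 2.
Proof.
move=> hb.
rewrite (zid2 _ _ (expm A) (Lin a P B)).
have -> : expm (dcl a P B) *m expm A - expm A - Lin a P B =
          (expm (dcl a P B) - 1%:M - dcl a P B) *m expm A.
  by rewrite !mulmxBl mul1mx dcl_e.
apply: bound_aux (Kof_ge0 _) (nm_ge0 _) hb (nm_ge0 _) (nm_sand _ _) _ (E2 _) (nm_mul _ _).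
exact: (E1 P_proj P_sum A_dec a_inj).
Qed.

Lemma Core2 B : nm B <= 1 ->
  nm (expm (A + B) - expm A *m expm (dcr a P B)) <= Cst Kr * nm B ^+ 2.
Proof.
move=> hb.
rewrite (zid2 _ _ (expm A) (Lin a P B)).
have -> : expm A *m expm (dcr a P B) - expm A - Lin a P B =
          expm A *m (expm (dcr a P B) - 1%:M - dcr a P B).
  by rewrite !mulmxBr mulmx1 e_dcr.
apply: bound_aux (Kof_ge0 _) (nm_ge0 _) hb (nm_ge0 _) (nm_sand _ _) _ (E2 _) _.
  exact: (E1 P_proj P_sum A_dec a_inj).
by rewrite mulrC; apply: nm_mul.
Qed.

Lemma sum_deltaV (V : zmodType) (F : 'I_r -> V) j : \sum_p (if j == p then F p else 0) = F j.
Proof.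
rewrite (bigD1 j) //= eqxx big1 ?addr0 // => p /negbTE.
by rewrite eq_sym => ->.
Qed.

Lemma sum_deltaV' (V : zmodType) (F : 'I_r -> V) j : \sum_p (if p == j then F p else 0) = F j.
Proof.
rewrite (bigD1 j) //= eqxx big1 ?addr0 // => p /negbTE -> //.
Qed.

Lemma sandwich (g : 'I_r -> 'I_r -> C) X j k :
  P j *m (\sum_p \sum_q g p q *: (P p *m X *m P q)) *m P k = g j k *: (P j *m X *m P k).
Proof.
rewrite mulmx_sumr mulmx_suml.
rewrite (eq_bigr (fun p => if j == p then g j k *: (P j *m X *m P k) else 0)).
  by rewrite sum_deltaV.
move=> p _; rewrite mulmx_sumr mulmx_suml.
rewrite (eq_bigr (fun q => if q == k then (if j == p then g j k *: (P j *m X *m P k) else 0) else 0)).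
  by rewrite sum_deltaV'.
move=> q _.
rewrite -scalemxAr -scalemxAl.
have -> : P j *m (P p *m X *m P q) *m P k = (P j *m P p) *m X *m (P q *m P k).
  by rewrite !mulmxA.
rewrite !P_proj.
case: (eqVneq j p) => [<-|_]; case: (eqVneq q k) => [->|_] //=;
  by rewrite ?mulmx0 ?mul0mx ?scaler0.
Qed.

Lemma sum_PXP X : \sum_j \sum_k P j *m X *m P k = X.
Proof.
rewrite (eq_bigr (fun j => P j *m X)); first by rewrite -mulmx_suml P_sum mul1mx.
by move=> j _; rewrite -mulmx_sumr P_sum mulmx1.
Qed.

Hypothesis hell : forall j k, ell a j k != 0.

Lemma dcl_cml B : dcl a P (cml a P B) = B.
Proof.
rewrite /dcl -[RHS]sum_PXP; apply: eq_bigr => j _; apply: eq_bigr => k _.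
by rewrite /cml sandwich scalerA mulfV ?hell // scale1r.
Qed.

Lemma dcr_cmr B : dcr a P (cmr a P B) = B.
Proof.
rewrite /dcr -[RHS]sum_PXP; apply: eq_bigr => j _; apply: eq_bigr => k _.
by rewrite /cmr sandwich scalerA mulfV ?hell // scale1r.
Qed.

End Core.

Lemma to_bigO2 (R : realType) (m : nat) (F G : 'M[R[i]]_m -> 'M[R[i]]_m) (Cc rho : R) :
  0 <= Cc -> 0 < rho ->
  (forall B, nm B <= rho -> nm (F B - G B) <= Cc * nm B ^+ 2) -> bigO2 F G.
Proof.
move=> C0 r0 h.
exists (Cc * ((m * m)%:R) ^+ 2); exists (rho / ((m * m)%:R + 1)).
  by rewrite divr_gt0 // ltr_wpDl.
move=> B hB.
have f0 : 0 <= frob B by apply: sqrtr_ge0.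
have hn := nm_le_frob B.
have hnr : nm B <= rho.
  apply: le_trans hn _; exact: (key_le (ler0n _ _) (lexx _) f0 (ltW hB) r0).
apply: le_trans (frob_le_nm _) _; apply: le_trans (h B hnr) _.
rewrite -mulrA; apply: ler_wpM2l => //.
by rewrite -exprMn; apply: pow_le => //; apply: nm_ge0.
Qed.

Theorem theorem1 (R : realType) (m r : nat) (A : 'M[R[i]]_m)
    (a : 'I_r -> R[i]) (P : 'I_r -> 'M[R[i]]_m)
    (a_inj : injective a)
    (P_neq0 : forall i, P i != 0)
    (P_proj : forall i j, P i *m P j = if i == j then P i else 0)
    (P_sum : \sum_i P i = 1%:M)
    (A_dec : A = \sum_i a i *: P i) :
  bigO2 (fun B => expm (A + B)) (fun B => expm (dcl a P B) *m expm A) /\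
  bigO2 (fun B => expm (A + B)) (fun B => expm A *m expm (dcr a P B)) /\
  ((forall j k, j != k -> cexp (a j - a k) != 1) ->
    bigO2 (fun B => expm B *m expm A) (fun B => expm (A + cml a P B)) /\
    bigO2 (fun B => expm A *m expm B) (fun B => expm (A + cmr a P B))).
Proof.
split.
  apply: (to_bigO2 (Cst_ge0 A _) ltr01) => B hB.
  exact: (Core1 P_proj P_sum A_dec a_inj hB).
split.
  apply: (to_bigO2 (Cst_ge0 A _) ltr01) => B hB.
  exact: (Core2 P_proj P_sum A_dec a_inj hB).
move=> hexp.
have hell : forall j k, ell a j k != 0.
  move=> j k; rewrite /ell; case: (eqVneq j k) => [_|hjk]; first exact: oner_neq0.
  have hd : a j - a k != 0 by rewrite subr_eq0 (inj_eq a_inj).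
  by rewrite mulf_neq0 ?invr_eq0 // subr_eq0 hexp.
split.
  pose K := Kof P (fun j k => (ell a j k)^-1).
  have K0 : 0 <= K := Kof_ge0 _ _.
  apply: (@to_bigO2 _ _ _ _ (Cst A (Kl a P) * K ^+ 2) (1 / (K + 1))).
  - by rewrite mulr_ge0 ?Cst_ge0 ?sqr_ge0.
  - by rewrite divr_gt0 // ltr_wpDl.
  move=> B hB.
  have hB' : nm (cml a P B) <= K * nm B := nm_sand _ _ _.
  have hB1 : nm (cml a P B) <= 1.
    apply: le_trans hB' _; exact: (key_le K0 (lexx _) (nm_ge0 _) hB ltr01).
  have := Core1 P_proj P_sum A_dec a_inj hB1; rewrite (dcl_cml P_proj P_sum hell) nmB => H.
  apply: le_trans H _; rewrite -mulrA; apply: ler_wpM2l; first exact: Cst_ge0.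
  by rewrite -exprMn; apply: pow_le; [exact: nm_ge0 | exact: hB'].
pose K := Kof P (fun j k => (ell a k j)^-1).
have K0 : 0 <= K := Kof_ge0 _ _.
apply: (@to_bigO2 _ _ _ _ (Cst A (Kr a P) * K ^+ 2) (1 / (K + 1))).
- by rewrite mulr_ge0 ?Cst_ge0 ?sqr_ge0.
- by rewrite divr_gt0 // ltr_wpDl.
move=> B hB.
have hB' : nm (cmr a P B) <= K * nm B := nm_sand _ _ _.
have hB1 : nm (cmr a P B) <= 1.
  apply: le_trans hB' _; exact: (key_le K0 (lexx _) (nm_ge0 _) hB ltr01).
have := Core2 P_proj P_sum A_dec a_inj hB1; rewrite (dcr_cmr P_proj P_sum hell) nmB => H.
apply: le_trans H _; rewrite -mulrA; apply: ler_wpM2l; first exact: Cst_ge0.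
by rewrite -exprMn; apply: pow_le; [exact: nm_ge0 | exact: hB'].
Qed.
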